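(* Let $SP_t(k)$ denote the smallest $n$ such that $PPL_t(n)=k$. Then $SP_t(1)=1$, $SP_t(2)=2$, $SP_t(3)=6$, and for all $k>0$, \[SP_t(k+3)=16\,SP_t(k)-6.\]
   Context: The Thue-Morse word $t=t[1]t[2]\cdots=abbabaabbaababba\cdots$ is the fixed point starting with $a$ of the morphism $a\mapsto abba,\ b\mapsto baab$. A palindrome is a word $p=p[1]\cdots p[n]$ with $p[i]=p[n-i+1]$ for all $i$. $PPL_t(n)$ is the minimal number of nonempty palindromes whose concatenation equals the prefix of $t$ of length $n$. *)

(* Defs.v *)
From mathcomp Require Import all_boot.
Set Implicit Arguments. Unset Strict Implicit. Unset Printing Implicit Defensive.

(* Letters: a = false, b = true. *)
Definition tm_morph (c : bool) : seq bool :=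
  if c then [:: true; false; false; true] else [:: false; true; true; false].

Definition tm_phi (w : seq bool) : seq bool := flatten (map tm_morph w).

(* iter n tm_phi [:: a] is a prefix of length 4^n >= n of the fixed point t
   starting with a; its first n letters are the prefix of t of length n. *)
Definition tprefix (n : nat) : seq bool := take n (iter n tm_phi [:: false]).

Definition palindrome (p : seq bool) : bool := p == rev p.

Definition pal_factorization (k : nat) (w : seq bool) : Prop :=
  exists s : seq (seq bool),
    [/\ size s = k, all (fun p => (p != [::]) && palindrome p) s & flatten s = w].

Definition PPL_t (n k : nat) : Prop :=
  pal_factorization k (tprefix n) /\
  forall j, pal_factorization j (tprefix n) -> k <= j.

Definition SP_t (k n : nat) : Prop :=
  PPL_t n k /\ forall m, PPL_t m k -> n <= m.

(* Main.v *)
Require Import Defs.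
From mathcomp Require Import all_boot zify.
Set Implicit Arguments. Unset Strict Implicit. Unset Printing Implicit Defensive.

Fixpoint tmf (fu n : nat) : bool :=
  match fu with 0 => false | fu'.+1 => if n == 0 then false else (n %% 2 == 1) (+) tmf fu' (n %/ 2) end.
Definition tm n := tmf n n.

Lemma tmf_st fu1 fu2 n : n <= fu1 -> n <= fu2 -> tmf fu1 n = tmf fu2 n.
Proof.
elim: fu1 fu2 n => [|fu1 IH] [|fu2] n /= h1 h2; try (have -> : n = 0 by lia); try done.
case: eqP => // nz; congr (_ (+) _); apply: IH; lia.
Qed.

Lemma tm_unf n : 0 < n -> tm n = (n %% 2 == 1) (+) tm (n %/ 2).
Proof.
case: n => // n _; rewrite /tm /=; congr (_ (+) _); apply: tmf_st; lia.
Qed.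

Lemma tmE0 q : tm (2*q) = tm q.
Proof.
case: q => [//|q]; rewrite tm_unf; last lia.
have -> : (2 * q.+1) %% 2 = 0 by lia.
have -> : (2 * q.+1) %/ 2 = q.+1 by lia. done.
Qed.

Lemma tmE1 q : tm (2*q+1) = ~~ tm q.
Proof.
rewrite tm_unf; last lia.
have -> : (2 * q + 1) %% 2 = 1 by lia.
have -> : (2 * q + 1) %/ 2 = q by lia. done.
Qed.

Lemma tm40 q : tm (4*q) = tm q.
Proof. by rewrite (_ : 4*q = 2*(2*q)) ?tmE0 //; lia. Qed.
Lemma tm41 q : tm (4*q+1) = ~~ tm q.
Proof. by rewrite (_ : 4*q+1 = 2*(2*q)+1) ?tmE1 ?tmE0 //; lia. Qed.
Lemma tm42 q : tm (4*q+2) = ~~ tm q.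
Proof. by rewrite (_ : 4*q+2 = 2*(2*q+1)) ?tmE0 ?tmE1 //; lia. Qed.
Lemma tm43 q : tm (4*q+3) = tm q.
Proof. by rewrite (_ : 4*q+3 = 2*(2*q+1)+1) ?tmE1 ?tmE1 ?negbK //; lia. Qed.

Lemma div2E y : exists q, y = 2*q \/ y = 2*q+1.
Proof. exists (y %/ 2); lia. Qed.
Lemma div4E y : exists q, [\/ y = 4*q, y = 4*q+1, y = 4*q+2 | y = 4*q+3].
Proof.
exists (y %/ 4); have [] : y = 4*(y%/4) + y%%4 /\ y%%4 < 4 by lia.
move: (y%%4) => r; case: r => [|[|[|[|r]]]] h1 h2; [apply: Or41|apply: Or42|apply: Or43|apply: Or44|]; lia.
Qed.

Lemma nocube x : tm x = tm (x+1) -> tm (x+1) = tm (x+2) -> False.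
Proof.
have [q [->|->]] := div2E x.
- by rewrite tmE1 tmE0; case: (tm q).
- have -> : 2*q+1+1 = 2*(q+1) by lia.
  have -> : 2*q+1+2 = 2*(q+1)+1 by lia.
  by rewrite tmE0 !tmE1; case: (tm (q+1)).
Qed.

Lemma nopal5 y : tm y = tm (y+4) -> tm (y+1) = tm (y+3) -> False.
Proof.
have [q [->|->]] := div2E y.
- have -> : 2*q+4 = 2*(q+2) by lia.
  have -> : 2*q+3 = 2*(q+1)+1 by lia.
  rewrite !tmE0 !tmE1.
  by have := @nocube q; case: (tm q); case: (tm (q+1)); case: (tm (q+2)); intuition.
- have -> : 2*q+1+4 = 2*(q+2)+1 by lia.
  have -> : 2*q+1+3 = 2*(q+2) by lia.
  have -> : 2*q+1+1 = 2*(q+1) by lia.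
  rewrite !tmE0 !tmE1.
  by have := @nocube q; case: (tm q); case: (tm (q+1)); case: (tm (q+2)); intuition.
Qed.

(* palindromic factor t[i..j) *)
Definition pal i j := forall x y, i <= x -> x < j -> x + y + 1 = i + j -> tm x = tm y.

Lemma pal_sub i j i' j' : pal i j -> i <= i' -> i' + j' = i + j -> pal i' j'.
Proof. move=> h hi he x y h1 h2 h3; apply: h; lia. Qed.

Lemma pal1 i : pal i i.+1.
Proof. move=> x y h1 h2 h3; have -> : x = i by lia. by have -> : y = i by lia. Qed.

Lemma pal3 x : tm x = tm (x+2) -> pal x (x+3).
Proof.
move=> h a b h1 h2 h3.
have : (a = x /\ b = x+2) \/ (a = x+1 /\ b = x+1) \/ (a = x+2 /\ b = x) by lia.
by case=> [[-> ->]|[[-> ->]|[-> ->]]].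
Qed.

Lemma pal4 i j : i < j -> pal i j -> pal (4*i) (4*j).
Proof.
move=> hij h x y h1 h2 h3.
have [a ha] := div4E x.
case: ha => hx; (have hp : tm a = tm (i + j - 1 - a) by apply: h; lia); rewrite hx.
- have -> : y = 4*(i+j-1-a)+3 by lia. by rewrite tm40 tm43.
- have -> : y = 4*(i+j-1-a)+2 by lia. by rewrite tm41 tm42 hp.
- have -> : y = 4*(i+j-1-a)+1 by lia. by rewrite tm41 tm42 hp.
- have -> : y = 4*(i+j-1-a) by lia. by rewrite tm40 tm43.
Qed.

Fixpoint Ff (fu n : nat) : nat :=
  match fu with 0 => 0 | fu'.+1 =>
    if n == 0 then 0 else
    match n %% 4 with
    | 0 => Ff fu' (n %/ 4)
    | 1 => Ff fu' (n %/ 4) + 1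
    | 2 => minn (Ff fu' (n %/ 4)) (Ff fu' (n %/ 4).+1) + 2
    | _ => Ff fu' (n %/ 4).+1 + 1
    end
  end.
Definition f n := Ff n n.

Lemma Ff_st fu1 fu2 n : n <= fu1 -> n <= fu2 -> Ff fu1 n = Ff fu2 n.
Proof.
elim: fu1 fu2 n => [|fu1 IH] [|fu2] n /= h1 h2; try (have -> : n = 0 by lia); try done.
case: eqP => // nz.
have : n %% 4 < 4 by lia.
case E: (n %% 4) => [|[|[|[|r]]]] _ //.
- apply: IH; lia.
- rewrite (IH fu2) //; lia.
- rewrite (IH fu2) ?(IH fu2 (n %/ 4).+1) //; lia.
- rewrite (IH fu2) //; lia.
Qed.

Lemma f_unf n : 0 < n -> f n =
    match n %% 4 with
    | 0 => f (n %/ 4)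
    | 1 => f (n %/ 4) + 1
    | 2 => minn (f (n %/ 4)) (f (n %/ 4).+1) + 2
    | _ => f (n %/ 4).+1 + 1
    end.
Proof.
case: n => // n _; rewrite /f /=.
have : n.+1 %% 4 < 4 by lia.
case E: (n.+1 %% 4) => [|[|[|[|r]]]] _ //.
- apply: Ff_st; lia.
- rewrite (@Ff_st n (n.+1 %/ 4) (n.+1 %/ 4)) //; lia.
- rewrite (@Ff_st n (n.+1 %/ 4) (n.+1 %/ 4)) ?(@Ff_st n (n.+1 %/ 4).+1 (n.+1 %/ 4).+1) //; lia.
- rewrite (@Ff_st n (n.+1 %/ 4).+1 (n.+1 %/ 4).+1) //; lia.
Qed.

Lemma f0 : f 0 = 0. Proof. by []. Qed.

Lemma fE0 x : f (4*x) = f x.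
Proof.
case: x => // x; rewrite f_unf; last lia.
have -> : (4 * x.+1) %% 4 = 0 by lia.
by have -> : (4 * x.+1) %/ 4 = x.+1 by lia.
Qed.
Lemma fE1 x : f (4*x+1) = f x + 1.
Proof.
rewrite f_unf; last lia.
have -> : (4 * x + 1) %% 4 = 1 by lia.
by have -> : (4 * x + 1) %/ 4 = x by lia.
Qed.
Lemma fE2 x : f (4*x+2) = minn (f x) (f (x+1)) + 2.
Proof.
rewrite f_unf; last lia.
have -> : (4 * x + 2) %% 4 = 2 by lia.
have -> : (4 * x + 2) %/ 4 = x by lia.
by rewrite [x+1]addn1.
Qed.
Lemma fE3 x : f (4*x+3) = f (x+1) + 1.
Proof.
rewrite f_unf; last lia.
have -> : (4 * x + 3) %% 4 = 3 by lia.
have -> : (4 * x + 3) %/ 4 = x by lia.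
by rewrite [x+1]addn1.
Qed.

Lemma fLip n : f (n+1) <= f n + 1.
Proof.
elim/ltn_ind: n => n IH.
have [q hq] := div4E n; case: hq => hn; rewrite hn.
- by rewrite fE1 fE0.
- rewrite (_ : 4*q+1+1 = 4*q+2) ?fE2 ?fE1; lia.
- rewrite (_ : 4*q+2+1 = 4*q+3) ?fE2 ?fE3; try lia.
  have := IH q; have : q < n by lia. move=> h /(_ h); lia.
- rewrite (_ : 4*q+3+1 = 4*(q+1)) ?fE0 ?fE3; lia.
Qed.

Lemma fR0 x y : y = 4*x -> f y = f x. Proof. by move=> ->; rewrite fE0. Qed.
Lemma fR1 x y : y = 4*x+1 -> f y = f x + 1. Proof. by move=> ->; rewrite fE1. Qed.
Lemma fR2 x z y : y = 4*x+2 -> z = x+1 -> f y = minn (f x) (f z) + 2.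
Proof. by move=> -> ->; rewrite fE2. Qed.
Lemma fR3 z x y : y = 4*x+3 -> z = x+1 -> f y = f z + 1.
Proof. by move=> -> ->; rewrite fE3. Qed.
Lemma fL a b : b = a+1 -> f b <= f a + 1. Proof. by move=> ->; apply: fLip. Qed.
Lemma tR0 x y : y = 4*x -> tm y = tm x. Proof. by move=> ->; rewrite tm40. Qed.
Lemma tR1 x y : y = 4*x+1 -> tm y = ~~ tm x. Proof. by move=> ->; rewrite tm41. Qed.
Lemma tR2 x y : y = 4*x+2 -> tm y = ~~ tm x. Proof. by move=> ->; rewrite tm42. Qed.
Lemma tR3 x y : y = 4*x+3 -> tm y = tm x. Proof. by move=> ->; rewrite tm43. Qed.

Lemma blockpal i j m E : pal i j -> i + j = 8*m -> i <= 4*m -> i + 4*E <= 4*m + 3 ->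
  E <= m -> pal (m-E) (m+E).
Proof.
move=> hp hs h1 h2 h3.
have key : forall x y, m - E <= x -> x < m -> x + y + 1 = 2*m -> tm x = tm y.
  move=> x y a1 a2 a3.
  rewrite -(@tR3 x (4*x+3)) // -(@tR0 y (4*y)) //; apply: hp; lia.
move=> x y a1 a2 a3.
have [lt|ge] := ltnP x m; first by apply: key; lia.
symmetry; apply: key; lia.
Qed.

Lemma ne_neg (b : bool) : b = ~~ b -> False. Proof. by case: b. Qed.

Lemma palA j : forall i, i < j -> pal i j -> f j <= f i + 1.
Proof.
elim/ltn_ind: j => j IH i hij hp.
have IH' : forall a b, a <= b -> b < j -> pal a b -> f b <= f a + 1.
  move=> a b hab hb pab; have [->|ne] := eqVneq a b; first lia.
  apply: IH => //; lia.
have [c [hc|hc]] := div2E (i+j).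
- (* even length *)
  have e0 : tm (c-1) = tm c by apply: hp; lia.
  have [m hm] := div4E c; case: hm => hm.
  +
    have m1 : 1 <= m by lia.
    have [e he] := div4E (j - c); case: he => he.
    * have hb := @blockpal i j m e hp ltac:(lia) ltac:(lia) ltac:(lia) ltac:(lia).
      rewrite (@fR0 (m+e) j) ?(@fR0 (m-e) i); try lia.
      apply: IH' => //; lia.
    * have hb := @blockpal i j m e hp ltac:(lia) ltac:(lia) ltac:(lia) ltac:(lia).
      rewrite (@fR1 (m+e) j) ?(@fR3 (m-e) (m-e-1) i); try lia.
      have := IH' (m-e) (m+e) ltac:(lia) ltac:(lia) hb; lia.
    * have hb := @blockpal i j m e hp ltac:(lia) ltac:(lia) ltac:(lia) ltac:(lia).
      have hb' := @blockpal i j m (e+1) hp ltac:(lia) ltac:(lia) ltac:(lia) ltac:(lia).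
      rewrite (@fR2 (m+e) (m+e+1) j) ?(@fR2 (m-e-1) (m-e) i); try lia.
      have := IH' (m-e) (m+e) ltac:(lia) ltac:(lia) hb.
      have := IH' (m-(e+1)) (m+(e+1)) ltac:(lia) ltac:(lia) hb'.
      rewrite (_ : m - (e+1) = m-e-1); last lia.
      rewrite (_ : m + (e+1) = m+e+1); last lia. lia.
    * have hb' := @blockpal i j m (e+1) hp ltac:(lia) ltac:(lia) ltac:(lia) ltac:(lia).
      rewrite (@fR3 (m+e+1) (m+e) j) ?(@fR1 (m-e-1) i); try lia.
      have := IH' (m-(e+1)) (m+(e+1)) ltac:(lia) ltac:(lia) hb'.
      rewrite (_ : m - (e+1) = m-e-1); last lia.
      rewrite (_ : m + (e+1) = m+e+1); last lia. lia.
  + exfalso; move: e0; rewrite (@tR0 m (c-1)) ?(@tR1 m c); try lia. try apply: ne_neg.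
  +
    have : j - c <= 6 \/ 7 <= j - c by lia.
    case=> [small|big].
    * have : j - c = 1 \/ j - c = 2 \/ j - c = 3 \/ 3 < j - c by lia.
      case=> [hh|[hh|[hh|hh]]].
      - rewrite (@fR3 (m+1) m j) ?(@fR1 m i); try lia. have := @fL m (m+1) erefl; lia.
      - rewrite (@fR0 (m+1) j) ?(@fR0 m i); try lia. have := @fL m (m+1) erefl; lia.
      - rewrite (@fR1 (m+1) j) ?(@fR3 m (m-1) i); try lia. have := @fL m (m+1) erefl; lia.
      - have p3 : pal (m-1) (m+2).
          rewrite (_ : m+2 = m-1+3); last lia. apply: pal3.
          rewrite (_ : m-1+2 = m+1); last lia.
          rewrite -(@tR3 (m-1) (c-3)); last lia.
          rewrite -(@tR0 (m+1) (c+2)); last lia.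
          apply: hp; lia.
        have := IH' (m-1) (m+2) ltac:(lia) ltac:(lia) p3.
        have : j - c = 4 \/ j - c = 5 \/ j - c = 6 by lia.
        case=> [h4|[h5|h6]].
        + rewrite (@fR2 (m+1) (m+2) j) ?(@fR2 (m-1) m i); try lia.
          have := @fL m (m+1) erefl; lia.
        + rewrite (@fR3 (m+2) (m+1) j) ?(@fR1 (m-1) i); try lia.
        + rewrite (@fR0 (m+2) j) ?(@fR0 (m-1) i); try lia.
    * exfalso.
      have a1 : tm (m-1) = tm (m+1).
        rewrite -(@tR3 (m-1) (c-3)); last lia.
        rewrite -(@tR0 (m+1) (c+2)); last lia. apply: hp; lia.
      have a2 : tm (m-2) = tm (m+2).
        rewrite -(@tR3 (m-2) (c-7)); last lia.
        rewrite -(@tR0 (m+2) (c+6)); last lia. apply: hp; lia.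
      apply: (@nopal5 (m-2)).
      rewrite (_ : m-2+4 = m+2) //; lia.
      rewrite (_ : m-2+1 = m-1); last lia.
      rewrite (_ : m-2+3 = m+1) //; lia.
  + exfalso; move: e0; rewrite (@tR2 m (c-1)) ?(@tR3 m c); try lia;
    try (move=> h; apply: (@ne_neg (tm m)); by rewrite -h).
- (* odd length *)
  have : j = i + 1 \/ j = i + 3 \/ i + 5 <= j by lia.
  case=> [h1|[h3|h5]].
  + rewrite h1; exact: fLip.
  + have e0 : tm i = tm (i+2) by apply: hp; lia.
    have [a ha] := div4E i; case: ha => ha.
    * exfalso; move: e0; rewrite (@tR0 a i) ?(@tR2 a (i+2)); try lia; try apply: ne_neg.
    * exfalso; move: e0; rewrite (@tR1 a i) ?(@tR3 a (i+2)); try lia;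
      try (move=> h; apply: (@ne_neg (tm a)); by rewrite -h).
    * rewrite (@fR1 (a+1) j) ?(@fR2 a (a+1) i); try lia. have := @fL a (a+1) erefl; lia.
    * rewrite (@fR2 (a+1) (a+2) j) ?(@fR3 (a+1) a i); try lia.
  + exfalso; apply: (@nopal5 (c-2)); apply: hp; lia.
Qed.

Inductive Rg (i0 : nat) : nat -> nat -> Prop :=
| Rg0 : Rg i0 0 i0
| RgS k i j : Rg i0 k i -> i < j -> pal i j -> Rg i0 k.+1 j.

Lemma Rg_lower k n : Rg 0 k n -> f n <= k.
Proof.
elim=> [//|k' i j _ IH hij hp]; have := palA hij hp; lia.
Qed.

Lemma Rg_pre i0 i1 k j : pal i0 i1 -> i0 < i1 -> Rg i1 k j -> Rg i0 k.+1 j.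
Proof.
move=> hp hl; elim=> [|k' i j' _ IH hij hp']; first exact: (RgS (Rg0 i0)).
exact: RgS IH hij hp'.
Qed.

Lemma Rg_inv i0 k n : Rg i0 k n -> i0 < n ->
  exists k' i, [/\ k = k'.+1, Rg i0 k' i, i < n & pal i n].
Proof.
case=> [|k' i j h1 h2 h3]; first by rewrite ltnn.
by exists k', i.
Qed.

Lemma Rg_4 k n : Rg 0 k n -> Rg 0 k (4*n).
Proof.
elim=> [|k' i j _ IH hij hp]; first by rewrite muln0; constructor.
apply: RgS IH _ (pal4 hij hp); lia.
Qed.

Lemma Rg_letter k n : Rg 0 k n -> Rg 0 k.+1 n.+1.
Proof. move=> h; exact: (RgS h (ltnSn n) (@pal1 n)). Qed.

Lemma Rg_upper n : exists k, k <= f n /\ Rg 0 k n.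
Proof.
elim/ltn_ind: n => n IH.
have [->|npos] := posnP n; first by exists 0; split=> //; constructor.
have [q hq] := div4E n; case: hq => hn.
- have [k [hk hr]] := IH q ltac:(lia).
  exists k; split; last by rewrite hn; apply: Rg_4.
  by rewrite hn fE0.
- have [k [hk hr]] := IH q ltac:(lia).
  exists k.+1; split; first by rewrite hn fE1; lia.
  rewrite hn addn1; apply: Rg_letter; exact: Rg_4.
- have [k [hk hr]] := IH q ltac:(lia).
  have [k1 [hk1 hr1]] := IH (q+1) ltac:(lia).
  have [le|lt] := leqP (f q) (f (q+1)).
  + exists k.+2; split; first by rewrite hn fE2; lia.
    rewrite hn (_ : 4*q+2 = (4*q).+1.+1); last lia.
    by do 2 apply: Rg_letter; apply: Rg_4.
  + have [k' [i [ek ri hi pi]]] := Rg_inv hr1 ltac:(lia).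
    have r4 := Rg_4 ri.
    have [eiq|neq] := eqVneq i q.
    * exists k'.+2; split; first by rewrite hn fE2; lia.
      rewrite hn (_ : 4*q+2 = (4*i).+1.+1); last lia.
      by do 2 apply: Rg_letter.
    * exists k'.+3; split; first by rewrite hn fE2; lia.
      rewrite hn; apply: (RgS (Rg_letter (Rg_letter r4))); first lia.
      apply: (pal_sub (pal4 hi pi)); lia.
- have [k1 [hk1 hr1]] := IH (q+1) ltac:(lia).
  have [k' [i [ek ri hi pi]]] := Rg_inv hr1 ltac:(lia).
  have r4 := Rg_4 ri.
  exists k'.+2; split; first by rewrite hn fE3; lia.
  rewrite hn; apply: (RgS (Rg_letter r4)); first lia.
  apply: (pal_sub (pal4 hi pi)); lia.
Qed.

Definition w i l := map tm (iota i l).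

Lemma pal_seq i l : palindrome (w i l) <-> pal i (i+l).
Proof.
rewrite /palindrome /w; split.
- move=> /eqP h x y h1 h2 h3.
  have := congr1 (nth false ^~ (x - i)) h.
  rewrite nth_rev size_map size_iota; last lia.
  rewrite !(nth_map 0) ?size_iota; try lia.
  rewrite !nth_iota; try lia.
  rewrite (_ : i + (x - i) = x); last lia.
  by rewrite (_ : i + (l - (x - i).+1) = y) //; lia.
- move=> h; apply/eqP; apply: (@eq_from_nth _ false); first by rewrite size_rev.
  move=> d; rewrite size_map size_iota => hd.
  rewrite nth_rev size_map size_iota // !(nth_map 0) ?size_iota; try lia.
  rewrite !nth_iota; try lia.
  apply: h; lia.
Qed.

Lemma wD i a b : w i (a + b) = w i a ++ w (i + a) b.
Proof. by rewrite /w iotaD map_cat. Qed.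

Lemma size_w i l : size (w i l) = l.
Proof. by rewrite /w size_map size_iota. Qed.

Lemma phi_cat a b : tm_phi (a ++ b) = tm_phi a ++ tm_phi b.
Proof. by rewrite /tm_phi map_cat flatten_cat. Qed.

Lemma phi_w m : tm_phi (w 0 m) = w 0 (4*m).
Proof.
elim: m => [//|m IH].
rewrite -addn1 wD phi_cat IH (_ : 4 * (m+1) = 4*m + 4); last lia.
rewrite wD; congr (_ ++ _).
rewrite /tm_phi /w /= cats0 add0n.
rewrite (_ : (4*m).+1 = 4*m+1); last lia.
rewrite (_ : (4*m+1).+1 = 4*m+2); last lia.
rewrite (_ : (4*m+2).+1 = 4*m+3); last lia.
rewrite add0n.
rewrite tm40 tm41 tm42 tm43 /tm_morph.
by case: (tm m).
Qed.

Lemma iter_w n : iter n tm_phi [:: false] = w 0 (4^n).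
Proof.
elim: n => [//|n IH]; by rewrite iterS IH phi_w expnS.
Qed.

Lemma tprefixE n : tprefix n = w 0 n.
Proof.
rewrite /tprefix iter_w.
have hn : n <= 4^n by apply: ltnW; apply: ltn_expl.
rewrite (_ : 4^n = n + (4^n - n)); last lia.
by rewrite wD take_size_cat // size_w.
Qed.

Definition P (p : seq bool) := (p != [::]) && palindrome p.

Lemma fact_to_R s : forall i L, all P s -> flatten s = w i L -> Rg i (size s) (i+L).
Proof.
elim: s => [|p s IH] i L /=.
- move=> _ h; have := congr1 size h; rewrite size_w /= => <-; rewrite addn0; constructor.
- case/andP=> /andP [pn pp] hs h.
  have hL : size p + size (flatten s) = L by rewrite -size_cat h size_w.
  move: h; rewrite -hL wD => /eqP; rewrite eqseq_cat ?size_w //.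
  case/andP=> /eqP e1 /eqP e2.
  have := IH _ _ hs e2; rewrite -addnA => hr.
  apply: Rg_pre hr.
  + apply/pal_seq; by rewrite -e1.
  + have : size p != 0 by rewrite size_eq0. lia.
Qed.

Lemma R_to_fact i0 k j : Rg i0 k j ->
  i0 <= j /\ exists s, [/\ size s = k, all P s & flatten s = w i0 (j - i0)].
Proof.
elim=> [|k' i j' _ [hle [s [h1 h2 h3]]] hij hp].
- split=> //; exists [::]; by rewrite subnn.
- split; first lia.
  exists (rcons s (w i (j' - i))); split.
  + by rewrite size_rcons h1.
  + rewrite all_rcons h2 andbT /P; apply/andP; split.
    * by rewrite -size_eq0 size_w; lia.
    * apply/pal_seq; by rewrite (_ : i + (j' - i) = j'); last lia.
  + rewrite -cats1 flatten_cat /= cats0 h3.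
    rewrite (_ : j' - i0 = (i - i0) + (j' - i)); last lia.
    by rewrite wD (_ : i0 + (i - i0) = i); last lia.
Qed.

Lemma pf_iff k n : pal_factorization k (tprefix n) <-> Rg 0 k n.
Proof.
rewrite tprefixE; split.
- case=> s [h1 h2 h3]; have := fact_to_R h2 h3; by rewrite h1.
- move/R_to_fact => [_ [s [h1 h2 h3]]]; exists s; split=> //.
  by rewrite h3 subn0.
Qed.

Lemma PPL_iff n k : PPL_t n k <-> f n = k.
Proof.
have [k0 [hk0 r0]] := Rg_upper n.
have e0 : k0 = f n by have := Rg_lower r0; lia.
split.
- case=> /pf_iff h1 h2.
  have := Rg_lower h1; have := h2 k0 (proj2 (pf_iff _ _) r0); lia.
- move=> <-; split; first by apply/pf_iff; rewrite -e0.
  by move=> j /pf_iff /Rg_lower.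
Qed.

Lemma SP_iff k n : SP_t k n <-> f n = k /\ forall m, f m = k -> n <= m.
Proof.
rewrite /SP_t PPL_iff; split=> [[h1 h2]|[h1 h2]]; split=> // m.
- by move=> /PPL_iff; apply: h2.
- by move=> /PPL_iff; apply: h2.
Qed.

Lemma ivt k m : k <= f m -> exists m', m' <= m /\ f m' = k.
Proof.
elim: m => [|m IH] h.
- exists 0; split=> //; move: h; rewrite f0; lia.
- have [le|lt] := leqP k (f m).
  + by have [m' [h1 h2]] := IH le; exists m'; split=> //; lia.
  + exists m.+1; split=> //; have := fLip m; rewrite addn1; lia.
Qed.

Lemma fstep x r : r < 4 ->
  [\/ r = 0 /\ f (4*x+r) = f x /\ f (4*x+r+1) = f x + 1,
      r = 1 /\ f (4*x+r) = f x + 1 /\ f (4*x+r+1) = minn (f x) (f (x+1)) + 2,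
      r = 2 /\ f (4*x+r) = minn (f x) (f (x+1)) + 2 /\ f (4*x+r+1) = f (x+1) + 1 |
      r = 3 /\ f (4*x+r) = f (x+1) + 1 /\ f (4*x+r+1) = f (x+1)].
Proof.
case: r => [|[|[|[|r]]]] hr.
- apply: Or41; split=> //; rewrite addn0 fE0 fE1; lia.
- apply: Or42; split=> //; rewrite fE1 (@fR2 x (x+1) (4*x+1+1)) //; lia.
- apply: Or43; split=> //; rewrite fE2 (@fR3 (x+1) x (4*x+2+1)) //; lia.
- apply: Or44; split=> //; rewrite fE3 (@fR0 (x+1) (4*x+3+1)) //; lia.
- lia.
Qed.

Theorem proposition14 :
  [/\ SP_t 1 1, SP_t 2 2, SP_t 3 6 &
      forall k n, 0 < k -> SP_t k n -> SP_t (k + 3) (16 * n - 6)].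
Proof.
split.
- apply/SP_iff; split; first by vm_compute.
  move=> m; case: (ltnP m 1) => [lt|//]; move: lt.
  by case: m => [|m] // _; vm_compute; congruence.
- apply/SP_iff; split; first by vm_compute.
  move=> m; case: (ltnP m 2) => [lt|//]; move: lt.
  by case: m => [|[|m]] // _; vm_compute; congruence.
- apply/SP_iff; split; first by vm_compute.
  move=> m; case: (ltnP m 6) => [lt|//]; move: lt.
  by case: m => [|[|[|[|[|[|m]]]]]] // _; vm_compute; congruence.
- move=> k n kpos /SP_iff [fn hmin].
  have below : forall m, m < n -> f m < k.
    move=> m hm; have [//|ge] := ltnP (f m) k.
    have [m' [h1 h2]] := ivt ge; have := hmin _ h2; lia.
  have npos : 0 < n by case: n fn {hmin below} => [|//]; rewrite f0; lia.
  have fn1 : f (n-1) = k-1.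
    have := below (n-1) ltac:(lia); have := @fL (n-1) n ltac:(lia); lia.
  apply/SP_iff; split.
  + rewrite (@fR2 (4*(n-1)+2) (4*(n-1)+3) (16*n-6)); try lia.
    rewrite (@fR2 (n-1) n (4*(n-1)+2)); try lia.
    rewrite (@fR3 n (n-1) (4*(n-1)+3)); try lia.
  + move=> m fm; rewrite leqNgt; apply/negP => hm.
    have [y [r0 [hr0 hy]]] : exists y r0, r0 < 4 /\ m = 4*y + r0 by exists (m %/ 4), (m %% 4); lia.
    have [q [r1 [hr1 hq]]] : exists q r1, r1 < 4 /\ y = 4*q + r1 by exists (y %/ 4), (y %% 4); lia.
    have hqn : q <= n - 1 by lia.
    have bq : f q <= k - 1 by have := below q; lia.
    have bq1 : (q+1 = n /\ f (q+1) = k) \/ f (q+1) <= k-1.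
      have [e|l] := eqVneq (q+1) n; [left; rewrite e; lia| right; have := below (q+1); lia].
    have hm' : f (4*y+r0) = k + 3 by rewrite -hy.
    subst y; case: (fstep (4*q+r1) hr0); case: (fstep q hr1);
      move=> [a0 [a1 a2]] [b0 [b1 b2]]; lia.
Qed.
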